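(* Let $N\ge 1$ and consider a multi-threshold neuron whose membrane voltage $V$ is a random variable uniformly distributed on $[0,1]$. Let $V_{th,1},\dots,V_{th,N}$ be thresholds with $V_{th,1}>V_{th,2}>\dots>V_{th,N}>0$ and $\sum_{i=1}^N V_{th,i}\le 1$. Suppose the neuron can fire at most one spike for each threshold, so that $V = \alpha_1 V_{th,1}+\alpha_2 V_{th,2}+\dots+\alpha_N V_{th,N}+r(V)$, where $\alpha_i\in\{0,1\}$ indicates whether a spike is fired at the $i$-th threshold and $r(V)\ge 0$ is the error between $V$ and the output weighted sum of spikes. Then the series of thresholds minimizing the expected error $\mathbb{E}[r(V)]=\int_0^1 r(V)\,dV$ satisfies $V_{th,i+1}=V_{th,i}/2$ for $i=1,\dots,N-1$ and $V_{th,N}=1/2^N$, and the minimal expected error equals $1/2^{N+1}$.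
   Context: Firing rule of the multi-threshold neuron: the thresholds are processed from highest to lowest. Set $R_0=V$; for $i=1,\dots,N$, the neuron fires a spike at threshold $i$ (i.e. $\alpha_i=1$) if $R_{i-1}\ge V_{th,i}$, and otherwise $\alpha_i=0$; then $R_i=R_{i-1}-\alpha_i V_{th,i}$. The error is $r(V)=R_N = V-\sum_{i=1}^N \alpha_i V_{th,i}$. *)

(* Defs.v *)
From Stdlib Require Import Reals Lra.
From Coquelicot Require Import Coquelicot.
Open Scope R_scope.

(* Thresholds are a function th : nat -> R; only th 1, ..., th N matter. *)

(* Remainder after processing thresholds 1..n (highest to lowest):
   R_0 = V, alpha_i = 1 iff R_{i-1} >= th i, R_i = R_{i-1} - alpha_i th i. *)
Fixpoint resid (th : nat -> R) (n : nat) (V : R) : R :=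
  match n with
  | O => V
  | S k => let Rk := resid th k V in
           if Rle_dec (th (S k)) Rk then Rk - th (S k) else Rk
  end.

Definition err (N : nat) (th : nat -> R) (V : R) : R := resid th N V.

Definition expected_err (N : nat) (th : nat -> R) : R :=
  RInt (fun V => err N th V) 0 1.

Definition admissible (N : nat) (th : nat -> R) : Prop :=
  (forall i : nat, (1 <= i < N)%nat -> th (S i) < th i) /\
  0 < th N /\
  sum_f 1 N th <= 1.

(* Main.v *)
Require Import Defs.
From Stdlib Require Import Reals Lra Lia Psatz.
From Coquelicot Require Import Coquelicot.
Open Scope R_scope.

Definition step (t V : R) : R := if Rle_dec t V then V - t else V.

Lemma resid_shift : forall n th V,
  resid th (S n) V = resid (fun i => th (S i)) n (step (th 1%nat) V).
Proof.
  induction n as [|n IH]; intros th V.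
  - reflexivity.
  - change (resid th (S (S n)) V) with
      (let Rk := resid th (S n) V in
       if Rle_dec (th (S (S n))) Rk then Rk - th (S (S n)) else Rk).
    rewrite IH. reflexivity.
Qed.

Lemma int_id a : ex_RInt (fun V => V) 0 a /\ RInt (fun V => V) 0 a = a^2/2.
Proof.
  assert (H : is_RInt (fun V => V) 0 a ((fun x => x^2/2) a - (fun x => x^2/2) 0)).
  { apply (is_RInt_derive (fun x => x^2/2)).
    - intros x _. auto_derive; auto. field.
    - intros x _. apply continuous_id. }
  split. eexists; exact H.
  rewrite (is_RInt_unique _ _ _ _ H). simpl. field.
Qed.

Lemma decomp (g : R -> R) (t a : R) :
  0 <= t -> (forall x, 0 <= x -> ex_RInt g 0 x) ->
  (0 <= a -> a <= t -> ex_RInt (fun V => g (step t V)) 0 a /\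
      RInt (fun V => g (step t V)) 0 a = RInt g 0 a) /\
  (t < a -> ex_RInt (fun V => g (step t V)) 0 a /\
      RInt (fun V => g (step t V)) 0 a = RInt g 0 t + RInt g 0 (a - t)).
Proof.
  intros Ht Hg.
  assert (E1 : forall b, 0 <= b -> b <= t ->
     forall x, Rmin 0 b < x < Rmax 0 b -> g x = g (step t x)).
  { intros b Hb Hbt x Hx. rewrite Rmin_left in Hx by lra.
    rewrite Rmax_right in Hx by lra. unfold step.
    destruct (Rle_dec t x); [lra|reflexivity]. }
  split.
  - intros Ha Hat. split.
    + apply (ex_RInt_ext g). apply E1; auto. apply Hg; auto.
    + symmetry. apply RInt_ext. apply E1; auto.
  - intros Hta.
    assert (I1 : ex_RInt (fun V => g (step t V)) 0 t).
    { apply (ex_RInt_ext g). apply E1; lra. apply Hg; lra. }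
    assert (Ig : ex_RInt g (1 * t + - t) (1 * a + - t)).
    { replace (1 * t + - t) with 0 by ring. apply Hg. lra. }
    assert (E2 : forall x, Rmin t a < x < Rmax t a ->
        scal 1 (g (1 * x + - t)) = g (step t x)).
    { intros x Hx. rewrite Rmin_left in Hx by lra.
      rewrite Rmax_right in Hx by lra. unfold scal; simpl; unfold mult; simpl. rewrite Rmult_1_l. unfold step.
      destruct (Rle_dec t x); [|lra]. f_equal. ring. }
    assert (I2 : ex_RInt (fun V => g (step t V)) t a).
    { apply (ex_RInt_ext (fun y => scal 1 (g (1 * y + - t)))). exact E2. apply (ex_RInt_comp_lin g 1 (- t) t a). exact Ig. }
    split.
    + eapply ex_RInt_Chasles; eauto.
    + rewrite <- (RInt_Chasles _ 0 t a I1 I2).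
      change plus with Rplus. f_equal.
      * symmetry. apply RInt_ext. apply E1; lra.
      * rewrite <- (RInt_ext _ _ _ _ E2). etransitivity; [apply (RInt_comp_lin g 1 (- t) t a Ig)|].
        f_equal; ring.
Qed.

Lemma main : forall M th, (forall i, (1 <= i <= M)%nat -> 0 < th i) ->
  forall a, 0 <= a ->
  ex_RInt (resid th M) 0 a /\ RInt (resid th M) 0 a >= a^2/2^(M+1) /\
  (0 < a -> RInt (resid th M) 0 a = a^2/2^(M+1) ->
     forall i, (1 <= i <= M)%nat -> th i = a/2^i).
Proof.
  induction M as [|m IH]; intros th Hpos a Ha.
  - destruct (int_id a) as [I1 I2]. simpl resid.
    split; [exact I1|]. split.
    + rewrite I2. simpl. lra.
    + intros _ _ i Hi. lia.
  - set (sh := fun i => th (S i)).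
    assert (Hsh : forall i, (1 <= i <= m)%nat -> 0 < sh i).
    { intros i Hi. apply Hpos. lia. }
    pose proof (IH sh Hsh) as IHs.
    set (t := th 1%nat).
    assert (Ht : 0 < t) by (apply Hpos; lia).
    set (g := resid sh m).
    assert (Hg : forall x, 0 <= x -> ex_RInt g 0 x) by (intros x Hx; apply IHs; auto).
    destruct (decomp g t a (Rlt_le _ _ Ht) Hg) as [D1 D2].
    assert (Eq : forall x, Rmin 0 a < x < Rmax 0 a -> g (step t x) = resid th (S m) x).
    { intros x _. rewrite resid_shift. reflexivity. }
    assert (P : 0 < 2 ^ (m + 1)) by (apply pow_lt; lra).
    replace (2 ^ (S m + 1)) with (2 * 2 ^ (m + 1)) by (simpl; ring).
    destruct (Rle_lt_dec a t) as [Hat|Hta].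
    + destruct (D1 Ha Hat) as [X1 X2].
      destruct (IHs a Ha) as [_ [L _]]. fold g in L.
      assert (R1 : RInt (resid th (S m)) 0 a = RInt g 0 a).
      { rewrite <- X2. symmetry. apply RInt_ext. exact Eq. }
      split; [eapply ex_RInt_ext; [exact Eq|exact X1]|].
      rewrite R1. split.
      * apply Rle_ge. apply Rge_le in L. eapply Rle_trans; [|exact L].
        apply Rmult_le_compat_l. nra. apply Rinv_le_contravar; lra.
      * intros Hapos HE. exfalso. apply Rge_le in L.
        assert (a ^ 2 / 2 ^ (m + 1) > a^2 / (2 * 2 ^ (m+1))).
        { unfold Rdiv. apply Rmult_gt_compat_l. nra. apply Rinv_lt_contravar; nra. }
        lra.
    + destruct (D2 Hta) as [X1 X2].
      destruct (IHs t (Rlt_le _ _ Ht)) as [_ [L1 Q1]].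
      destruct (IHs (a - t) ltac:(lra)) as [_ [L2 _]]. fold g in L1, Q1, L2.
      assert (R1 : RInt (resid th (S m)) 0 a = RInt g 0 t + RInt g 0 (a - t)).
      { rewrite <- X2. symmetry. apply RInt_ext. exact Eq. }
      split; [eapply ex_RInt_ext; [exact Eq|exact X1]|].
      rewrite R1.
      assert (K : t ^ 2 / 2 ^ (m + 1) + (a - t) ^ 2 / 2 ^ (m + 1) - a ^ 2 / (2 * 2 ^ (m + 1))
                  = (2 * t - a) ^ 2 / (2 * 2 ^ (m+1))) by (field; lra).
      assert (K2 : 0 <= (2 * t - a) ^ 2 / (2 * 2 ^ (m+1))).
      { apply Rmult_le_pos. apply pow2_ge_0. apply Rlt_le, Rinv_0_lt_compat. lra. }
      split; [lra|].
      intros Hapos HE.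
      assert (Z : (2 * t - a) ^ 2 / (2 * 2 ^ (m+1)) = 0) by lra.
      assert (Z2 : (2 * t - a) ^ 2 = 0).
      { unfold Rdiv in Z. apply Rmult_integral in Z. destruct Z as [Z|Z]; auto.
        exfalso. apply (Rinv_neq_0_compat (2 * 2 ^ (m+1))); lra. }
      assert (Th : t = a / 2) by nra.
      assert (G1 : RInt g 0 t = t ^ 2 / 2 ^ (m + 1)) by lra.
      specialize (Q1 Ht G1).
      intros i Hi. destruct i as [|j]; [lia|].
      destruct j as [|j].
      * fold t. rewrite Th. field.
      * change (th (S (S j))) with (sh (S j)). rewrite Q1 by lia.
        rewrite Th. simpl. field. apply pow_nonzero. lra.
Qed.

Lemma value : forall M th a, 0 < a -> (forall i, (1 <= i <= M)%nat -> th i = a / 2^i) ->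
  RInt (resid th M) 0 a = a^2/2^(M+1).
Proof.
  induction M as [|m IH]; intros th a Ha Hth.
  - destruct (int_id a) as [_ I2]. simpl resid. rewrite I2. simpl. field.
  - set (sh := fun i => th (S i)).
    set (t := th 1%nat).
    assert (Ht : t = a / 2) by (unfold t; rewrite Hth by lia; simpl; field).
    assert (Hshv : forall i, (1 <= i <= m)%nat -> sh i = (a/2) / 2^i).
    { intros i Hi. unfold sh. rewrite Hth by lia. simpl. field.
      apply pow_nonzero. lra. }
    assert (Hsh : forall i, (1 <= i <= m)%nat -> 0 < sh i).
    { intros i Hi. rewrite Hshv by auto. apply Rdiv_lt_0_compat. lra. apply pow_lt; lra. }
    set (g := resid sh m).
    assert (Hg : forall x, 0 <= x -> ex_RInt g 0 x)
      by (intros x Hx; apply (main m sh Hsh x Hx)).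
    destruct (decomp g t a ltac:(lra) Hg) as [_ D2].
    destruct (D2 ltac:(lra)) as [_ X2].
    assert (Eq : forall x, Rmin 0 a < x < Rmax 0 a -> g (step t x) = resid th (S m) x).
    { intros x _. rewrite resid_shift. reflexivity. }
    rewrite <- (RInt_ext _ _ _ _ Eq). rewrite X2.
    replace (a - t) with (a / 2) by lra. rewrite Ht.
    unfold g. rewrite (IH sh (a/2)) by (auto; lra).
    replace (2 ^ (S m + 1)) with (2 * 2 ^ (m + 1)) by (simpl; ring).
    match goal with |- ?x = ?y => change (@eq R x y) end. field. apply pow_nonzero. lra.
Qed.

Lemma sum_half : forall n, sum_f_R0 (fun x => / 2 ^ (x + 1)) n = 1 - / 2 ^ (n + 1).
Proof.
  induction n as [|n IH].
  - simpl. field.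
  - simpl sum_f_R0. rewrite IH.
    replace (2 ^ (S n + 1)) with (2 * 2 ^ (n + 1)) by (simpl; ring).
    field. apply pow_nonzero. lra.
Qed.

Theorem theorem1 (N : nat) (hN : (1 <= N)%nat) :
  (* the thresholds V_{th,i} = 1/2^i are admissible and achieve error 1/2^(N+1) *)
  admissible N (fun i => / 2 ^ i) /\
  expected_err N (fun i => / 2 ^ i) = / 2 ^ (N + 1) /\
  (* every admissible choice has expected error >= 1/2^(N+1), and any minimizer
     satisfies V_{th,i+1} = V_{th,i}/2 and V_{th,N} = 1/2^N *)
  (forall th : nat -> R, admissible N th ->
     expected_err N th >= / 2 ^ (N + 1) /\
     (expected_err N th = / 2 ^ (N + 1) ->
        (forall i : nat, (1 <= i < N)%nat -> th (S i) = th i / 2) /\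
        th N = / 2 ^ N)).
Proof.
  split; [|split].
  - split; [|split].
    + intros i _. apply Rinv_lt_contravar.
      * apply Rmult_lt_0_compat; apply pow_lt; lra.
      * simpl. assert (0 < 2 ^ i) by (apply pow_lt; lra). lra.
    + apply Rinv_0_lt_compat, pow_lt; lra.
    + unfold sum_f. rewrite sum_half.
      replace (N - 1 + 1)%nat with N by lia.
      assert (0 < / 2 ^ N) by (apply Rinv_0_lt_compat, pow_lt; lra). lra.
  - unfold expected_err, err. rewrite (value N _ 1).
    + field. apply pow_nonzero. lra.
    + lra.
    + intros i _. field. apply pow_nonzero. lra.
  - intros th [Hdec [HN _]].
    assert (Hk : forall k, (k <= N - 1)%nat -> 0 < th (N - k)%nat).
    { induction k as [|k IHk]; intros Hk.
      - replace (N - 0)%nat with N by lia. exact HN.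
      - assert (th (S (N - S k)) < th (N - S k)%nat) by (apply Hdec; lia).
        replace (S (N - S k)) with (N - k)%nat in H by lia.
        specialize (IHk ltac:(lia)). lra. }
    assert (Hpos : forall i, (1 <= i <= N)%nat -> 0 < th i).
    { intros i Hi. replace i with (N - (N - i))%nat by lia. apply Hk. lia. }
    destruct (main N th Hpos 1 ltac:(lra)) as [_ [L Q]].
    unfold expected_err, err.
    replace (1 ^ 2 / 2 ^ (N + 1)) with (/ 2 ^ (N + 1)) in L, Q by (simpl; field; apply pow_nonzero; lra).
    split; [exact L|].
    intros HE. specialize (Q ltac:(lra) HE).
    split.
    + intros i Hi. rewrite !Q by lia. simpl. field. apply pow_nonzero. lra.
    + rewrite Q by lia. field. apply pow_nonzero. lra.
Qed.
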